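(* Let $A$ be a commutative ring. Then there is a natural bijection of right $\mathrm{GL}_2(A)$-sets $\pi_0(\Gamma(A))\leftrightarrow \mathrm{GE}_2(A)\backslash \mathrm{GL}_2(A)$.
   Context: $\Gamma(A)$ is the graph whose vertices are classes of unimodular rows $(a,b)\in A^2$ modulo multiplication by units, with $\{[u],[v]\}$ an edge when the matrix with rows $u,v$ lies in $\mathrm{GL}_2(A)$; $\mathrm{GL}_2(A)$ acts on the right by matrix multiplication. $E_2(A)$ is the subgroup of $\mathrm{SL}_2(A)$ generated by elementary matrices, and $\mathrm{GE}_2(A)$ is the subgroup of $\mathrm{GL}_2(A)$ generated by $E_2(A)$ and the invertible diagonal matrices. *)

(* Defs.v *)
From HB Require Import structures.
From mathcomp Require Import all_boot all_order all_algebra.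
From Stdlib Require Import Relations.
Set Implicit Arguments.
Unset Strict Implicit.
Unset Printing Implicit Defensive.
Import GRing.Theory.
Local Open Scope ring_scope.

(* A : comPzRingType = arbitrary commutative ring
   (the zero ring is allowed). Units and invertibility are stated as Props. *)

Section GammaDefs.
Variable A : comPzRingType.

Definition is_unit (a : A) : Prop := exists b : A, a * b = 1.

Definition unimodular (u : 'rV[A]_2) : Prop :=
  exists x y : A, u 0 0 * x + u 0 1 * y = 1.

Definition unit_equiv (u v : 'rV[A]_2) : Prop :=
  exists l : A, is_unit l /\ v = l *: u.

Definition inGL2 (M : 'M[A]_2) : Prop :=
  exists N : 'M[A]_2, M *m N = 1%:M /\ N *m M = 1%:M.

Definition rows2 (u v : 'rV[A]_2) : 'M[A]_2 :=
  \matrix_(i < 2, j < 2) if i == 0 then u 0 j else v 0 j.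

(* edges of Gamma(A), lifted to representatives *)
Definition gamma_edge (u v : 'rV[A]_2) : Prop := inGL2 (rows2 u v).

(* one step: same vertex (unit multiple) or adjacent vertices *)
Definition gamma_step (u v : 'rV[A]_2) : Prop :=
  unimodular u /\ unimodular v /\ (unit_equiv u v \/ gamma_edge u v).

Definition gamma_connected : relation 'rV[A]_2 :=
  clos_refl_sym_trans _ gamma_step.

Definition elementary (M : 'M[A]_2) : Prop :=
  exists t : A,
    M = \matrix_(i < 2, j < 2) (if i == j then 1 else if (i == 0) && (j == 1) then t else 0)
 \/ M = \matrix_(i < 2, j < 2) (if i == j then 1 else if (i == 1) && (j == 0) then t else 0).

Definition inv_diag (M : 'M[A]_2) : Prop :=
  exists a b : A, is_unit a /\ is_unit b /\
    M = \matrix_(i < 2, j < 2) (if i == j then (if i == 0 then a else b) else 0).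

Inductive gen_subgroup (S : 'M[A]_2 -> Prop) : 'M[A]_2 -> Prop :=
  | gen_in M : S M -> gen_subgroup S M
  | gen_one : gen_subgroup S 1%:M
  | gen_mul M N : gen_subgroup S M -> gen_subgroup S N -> gen_subgroup S (M *m N)
  | gen_inv M N : gen_subgroup S M -> M *m N = 1%:M -> N *m M = 1%:M ->
                  gen_subgroup S N.

Definition inE2 : 'M[A]_2 -> Prop := gen_subgroup elementary.

Definition inGE2 : 'M[A]_2 -> Prop :=
  gen_subgroup (fun M => inE2 M \/ inv_diag M).

End GammaDefs.

(* Main.v *)
Require Import Defs.
From HB Require Import structures.
From mathcomp Require Import all_boot all_order all_algebra.
From Stdlib Require Import Relations.
From mathcomp Require Import ring.
Import GRing.Theory.
Local Open Scope ring_scope.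

Section Helpers.
Variable A : comPzRingType.
Implicit Types (g h k M N : 'M[A]_2) (u v : 'rV[A]_2).

Lemma ord2P (i : 'I_2) : i = 0 \/ i = 1.
Proof. case: i => [[|[|i]] Hi]; [left|right|by []]; exact: val_inj. Qed.

Lemma mx2P M N : M 0 0 = N 0 0 -> M 0 1 = N 0 1 -> M 1 0 = N 1 0 ->
  M 1 1 = N 1 1 -> M = N.
Proof.
move=> *; apply/matrixP => i j.
by case: (ord2P i) => ->; case: (ord2P j) => ->.
Qed.

Lemma rv2P u v : u 0 0 = v 0 0 -> u 0 1 = v 0 1 -> u = v.
Proof.
move=> *; apply/rowP => j.
by case: (ord2P j) => ->.
Qed.

Lemma big_ord2 (F : 'I_2 -> A) : \sum_(i < 2) F i = F 0 + F 1.
Proof. rewrite big_ord_recr big_ord_recl big_ord0 /= addr0.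
by congr (F _ + F _); apply: val_inj. Qed.

Lemma mulE2 M N i j : (M *m N) i j = M i 0 * N 0 j + M i 1 * N 1 j.
Proof. by rewrite mxE big_ord2. Qed.

Lemma GL_mul g h : inGL2 g -> inGL2 h -> inGL2 (g *m h).
Proof.
move=> [gi [g1 g2]] [hi [h1 h2]]; exists (hi *m gi); split.
  by rewrite mulmxA -(mulmxA g) h1 mulmx1 g1.
by rewrite mulmxA -(mulmxA hi) g2 mulmx1 h2.
Qed.

Arguments GL_mul {g h}.

Lemma GL_unimod0 g : inGL2 g -> unimodular (row 0 g).
Proof.
move=> [gi [g1 _]]; exists (gi 0 0), (gi 1 0); rewrite !mxE.
have := congr1 (fun M => M 0 0) g1; rewrite mulE2 !mxE /=. by [].
Qed.

Arguments GL_unimod0 {g}.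

Lemma GL_unimod1 g : inGL2 g -> unimodular (row 1 g).
Proof.
move=> [gi [g1 _]]; exists (gi 0 1), (gi 1 1); rewrite !mxE.
have := congr1 (fun M => M 1 1) g1; rewrite mulE2 !mxE /=. by [].
Qed.

Arguments GL_unimod1 {g}.

Lemma rows2_row g : rows2 (row 0 g) (row 1 g) = g.
Proof. by apply: mx2P; rewrite !mxE. Qed.

Definition Up (t : A) : 'M[A]_2 :=
  \matrix_(i < 2, j < 2) (if i == j then 1 else if (i == 0) && (j == 1) then t else 0).
Definition Lo (t : A) : 'M[A]_2 :=
  \matrix_(i < 2, j < 2) (if i == j then 1 else if (i == 1) && (j == 0) then t else 0).
Definition Dg (a b : A) : 'M[A]_2 :=
  \matrix_(i < 2, j < 2) (if i == j then (if i == 0 then a else b) else 0).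

Lemma Up_GL t : inGL2 (Up t).
Proof.
exists (Up (- t)); split; apply: mx2P; rewrite !mulE2 !mxE /=;
  rewrite ?mulr1 ?mul1r ?mulr0 ?mul0r ?addr0 ?add0r ?addrN ?addNr //.
Qed.

Lemma Lo_GL t : inGL2 (Lo t).
Proof.
exists (Lo (- t)); split; apply: mx2P; rewrite !mulE2 !mxE /=;
  rewrite ?mulr1 ?mul1r ?mulr0 ?mul0r ?addr0 ?add0r ?addrN ?addNr //.
Qed.

Lemma elem_GL M : elementary M -> inGL2 M.
Proof. by case=> t [->|->]; [apply: Up_GL | apply: Lo_GL]. Qed.

Lemma diag_GL M : inv_diag M -> inGL2 M.
Proof.
case=> a [b [[a' Ha] [[b' Hb] ->]]].
exists (Dg a' b'); split; apply: mx2P; rewrite !mulE2 !mxE /=;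
  rewrite ?mulr1 ?mul1r ?mulr0 ?mul0r ?addr0 ?add0r //.
  by rewrite mulrC.
by rewrite mulrC.
Qed.

Lemma gen_GL (S : 'M[A]_2 -> Prop) : (forall M, S M -> inGL2 M) ->
  forall k, gen_subgroup S k -> inGL2 k.
Proof.
move=> HS k; elim => {k} [M /HS //| | M N _ GM _ GN | M N _ GM MN NM].
- by exists 1%:M; rewrite mulmx1.
- exact: GL_mul.
- by exists M.
Qed.

Lemma GE_GL k : inGE2 k -> inGL2 k.
Proof.
apply: gen_GL => M [HM|HM]; last exact: diag_GL.
exact: (gen_GL _ elem_GL _ HM).
Qed.

Arguments GE_GL {k}.

Definition Qk k := inGL2 k /\
  forall g, inGL2 g -> gamma_connected (row 0 (k *m g)) (row 0 g).

Lemma Q_gen (S : 'M[A]_2 -> Prop) : (forall M, S M -> Qk M) ->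
  forall k, gen_subgroup S k -> Qk k.
Proof.
move=> HS k; elim => {k} [M /HS //| | M N _ [GM HM] _ [GN HN] | M N _ [GM HM] MN NM].
- split; first by exists 1%:M; rewrite mulmx1.
  by move=> g _; rewrite mul1mx; apply: rst_refl.
- split; first exact: GL_mul.
  move=> g Gg; rewrite -mulmxA.
  apply: (rst_trans _ _ _ (row 0 (N *m g))); [apply: HM; exact: GL_mul | exact: HN].
- have GN : inGL2 N by exists M.
  split=> // g Gg.
  have GNg := GL_mul GN Gg.
  apply: rst_sym; have := HM _ GNg. by rewrite mulmxA MN mul1mx.
Qed.

Lemma step_GL u v g : inGL2 g -> row 0 g = u -> row 1 g = v -> gamma_step u v.
Proof.
move=> Gg <- <-; split; first exact: GL_unimod0.
split; first exact: GL_unimod1.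
by right; rewrite /gamma_edge rows2_row.
Qed.

Arguments step_GL {u v g}.

Definition Sw : 'M[A]_2 := \matrix_(i < 2, j < 2) (if i == j then 0 else 1).

Lemma Up_Q t : Qk (Up t).
Proof.
split; first exact: Up_GL.
move=> g Gg.
have GS : inGL2 Sw.
  exists Sw; split; apply: mx2P; rewrite !mulE2 !mxE /=;
  rewrite ?mulr1 ?mul1r ?mulr0 ?mul0r ?addr0 ?add0r //.
apply: rst_sym; apply: (rst_trans _ _ _ (row 1 g)).
  by apply: rst_step; apply: (step_GL Gg).
apply: rst_step; apply: (step_GL (g := Sw *m (Up t *m g))).
- exact: GL_mul GS (GL_mul (Up_GL t) Gg).
- apply: rv2P; rewrite !mxE !big_ord2 !mxE /= !big_ord2 !mxE /=;
  rewrite ?mulr1 ?mul1r ?mulr0 ?mul0r ?addr0 ?add0r //.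
- apply: rv2P; rewrite !mxE !big_ord2 !mxE /= !big_ord2 !mxE /=;
  rewrite ?mulr1 ?mul1r ?mulr0 ?mul0r ?addr0 ?add0r //.
Qed.

Lemma Lo_Q t : Qk (Lo t).
Proof.
split; first exact: Lo_GL.
move=> g Gg.
have -> : row 0 (Lo t *m g) = row 0 g.
  apply: rv2P; rewrite !mxE !big_ord2 !mxE /=;
  rewrite ?mulr1 ?mul1r ?mulr0 ?mul0r ?addr0 ?add0r //.
exact: rst_refl.
Qed.

Lemma diag_Q M : inv_diag M -> Qk M.
Proof.
move=> HM; split; first exact: diag_GL.
case: HM => a [b [Ha [_ ->]]] g Gg.
apply: rst_sym; apply: rst_step; split; first exact: GL_unimod0.
split.
  have [x [y Hxy]] := GL_unimod0 Gg.
  case: Ha => a' Ha.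
  exists (a' * x), (a' * y).
  move: Hxy; rewrite !mxE !big_ord2 !mxE /= => Hxy.
  rewrite ?mulr1 ?mul1r ?mulr0 ?mul0r ?addr0 ?add0r.
  by rewrite !mulrA -!(mulrA a) !(mulrC _ a') !mulrA Ha !mul1r.
left; exists a; split=> //.
apply: rv2P; rewrite !mxE !big_ord2 !mxE /=;
  rewrite ?mulr1 ?mul1r ?mulr0 ?mul0r ?addr0 ?add0r //.
Qed.

Lemma GE_Q k : inGE2 k -> Qk k.
Proof.
apply: Q_gen => M [HM|HM]; last exact: diag_Q.
apply: (Q_gen _ _ _ HM) => N [t [->|->]]; [exact: Up_Q | exact: Lo_Q].
Qed.

Arguments GE_Q {k}.

Lemma completion u : unimodular u -> exists g, inGL2 g /\ row 0 g = u.
Proof.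
case=> x [y Hxy].
exists (\matrix_(i < 2, j < 2) if i == 0 then u 0 j else
          (if j == 0 then - y else x)); split; last first.
  by apply: rv2P; rewrite !mxE.
exists (\matrix_(i < 2, j < 2) if i == 0 then (if j == 0 then x else - u 0 1)
          else (if j == 0 then y else u 0 0)).
split; apply: mx2P; rewrite !mulE2 !mxE /=.
all: try (by []).
all: rewrite -?Hxy; ring.
Qed.


Lemma Dg_GE (a b : A) : is_unit a -> is_unit b -> inGE2 (Dg a b).
Proof. by move=> Ha Hb; apply: gen_in; right; exists a, b. Qed.

Lemma Lo_GE t : inGE2 (Lo t).
Proof. by apply: gen_in; left; apply: gen_in; exists t; right. Qed.

Arguments Dg_GE {a b}.

Lemma Up_GE t : inGE2 (Up t).
Proof. by apply: gen_in; left; apply: gen_in; exists t; left. Qed.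

Lemma same_row g h : inGL2 g -> inGL2 h -> row 0 g = row 0 h ->
  exists k, inGE2 k /\ h = k *m g.
Proof.
move=> Gg Gh E; have [gi [g1 g2]] := Gg.
set m := h *m gi.
have Em : row 0 m = row 0 (1%:M : 'M[A]_2) by rewrite /m !row_mul -E -row_mul g1.
have m00 : m 0 0 = 1 by have := congr1 (fun r : 'rV[A]_2 => r 0 0) Em; rewrite !mxE.
have m01 : m 0 1 = 0 by have := congr1 (fun r : 'rV[A]_2 => r 0 1) Em; rewrite !mxE.
have Gm : inGL2 m by apply: GL_mul => //; exists g.
have hm : h = m *m g by rewrite /m -mulmxA g2 mulmx1.
clearbody m.
have [n [mn _]] := Gm.
have n01 : n 0 1 = 0.
  have := congr1 (fun M : 'M[A]_2 => M 0 1) mn; rewrite mulE2 m00 m01 !mxE /=.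
  by rewrite mul1r mul0r addr0.
have mn11 : m 1 1 * n 1 1 = 1.
  have := congr1 (fun M : 'M[A]_2 => M 1 1) mn; rewrite mulE2 n01 !mxE /=.
  by rewrite mulr0 add0r.
exists (Dg 1 (m 1 1) *m Lo (n 1 1 * m 1 0)); split.
  apply: gen_mul; last exact: Lo_GE.
  by apply: Dg_GE; [exists 1; rewrite mulr1 | exists (n 1 1)].
have -> : Dg 1 (m 1 1) *m Lo (n 1 1 * m 1 0) = m.
  apply: mx2P; rewrite !mulE2 !mxE /= ?m00 ?m01;
  rewrite ?mulr1 ?mul1r ?mulr0 ?mul0r ?addr0 ?add0r //.
  by rewrite mulrA mn11 mul1r.
by [].
Qed.

Arguments same_row {g h}.
Arguments completion {u}.

Definition Cr u v := forall g h, inGL2 g -> inGL2 h -> row 0 g = u -> row 0 h = v ->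
  exists k, inGE2 k /\ h = k *m g.

Lemma C_witness u v g0 h0 k0 : inGL2 g0 -> inGL2 h0 -> row 0 g0 = u ->
  row 0 h0 = v -> inGE2 k0 -> h0 = k0 *m g0 -> Cr u v.
Proof.
move=> G0 H0 R0 S0 K0 E0 g h Gg Gh Rg Rh.
have [k2 [K2 E2]] := same_row Gg G0 (etrans Rg (esym R0)).
have [k1 [K1 E1]] := same_row H0 Gh (etrans S0 (esym Rh)).
exists (k1 *m k0 *m k2); split.
  by apply: gen_mul => //; apply: gen_mul.
by rewrite E1 E0 E2 !mulmxA.
Qed.

Lemma C_trans u w v : unimodular w -> Cr u w -> Cr w v -> Cr u v.
Proof.
move=> /completion [gw [Gw Rw]] C1 C2 g h Gg Gh Rg Rh.
have [k1 [K1 E1]] := C1 g gw Gg Gw Rg Rw.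
have [k2 [K2 E2]] := C2 gw h Gw Gh Rw Rh.
exists (k2 *m k1); split; first exact: gen_mul.
by rewrite E2 E1 mulmxA.
Qed.

Arguments C_trans {u w v}.

Lemma C_sym u v : Cr u v -> Cr v u.
Proof.
move=> C g h Gg Gh Rg Rh.
have [k [K E]] := C h g Gh Gg Rh Rg.
have [ki [k1 k2]] := GE_GL K.
exists ki; split; first exact: (gen_inv K k1 k2).
by rewrite E mulmxA k2 mul1mx.
Qed.

Arguments C_witness {u v g0 h0 k0}.

Lemma C_step u v : gamma_step u v -> Cr u v.
Proof.
case=> Uu [Uv [[l [[l' Hl] ->]]|Ed]].
  have [g [Gg Rg]] := completion Uu.
  have GD : inGE2 (Dg l 1) by apply: Dg_GE; [exists l' | exists 1; rewrite mulr1].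
  apply: (C_witness (k0 := Dg l 1) Gg (GL_mul (GE_GL GD) Gg) Rg _ GD erefl).
  rewrite -Rg; apply: rv2P; rewrite !mxE !big_ord2 !mxE /=;
  by rewrite ?mulr1 ?mul1r ?mulr0 ?mul0r ?addr0 ?add0r.
pose J : 'M[A]_2 := Up 1 *m Lo (-1) *m Up 1.
have GJ : inGE2 J by apply: gen_mul; [apply: gen_mul|]; [exact: Up_GE|exact: Lo_GE|exact: Up_GE].
apply: (C_witness (k0 := J) Ed (GL_mul (GE_GL GJ) Ed) _ _ GJ erefl).
  by apply: rv2P; rewrite !mxE.
apply: rv2P; rewrite /J !mxE !big_ord2 !mxE /= !big_ord2 !mxE /= !big_ord2 !mxE /=.
all: ring.
Qed.

Lemma conn_C u v : gamma_connected u v ->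
  u = v \/ (unimodular u /\ unimodular v /\ Cr u v).
Proof.
elim => {u v} [u v St | u | u v _ IH | u w v _ IH1 _ IH2].
- right; split; first by case: St.
  split; first by case: St => _ [].
  exact: C_step.
- by left.
- case: IH => [->|[Uu [Uv C]]]; [by left | right; do 2!split=> //; exact: C_sym].
- case: IH1 => [->|[Uu [Uw C1]]] //.
  case: IH2 => [<-|[_ [Uv C2]]]; first by right.
  right; do 2!split=> //; exact: (C_trans Uw C1 C2).
Qed.

End Helpers.

Theorem theorem3p3 (A : comPzRingType) :
  exists f : 'M[A]_2 -> 'rV[A]_2,
    (forall g, inGL2 g -> unimodular (f g)) /\
    (forall g h, inGL2 g -> inGL2 h ->
       (gamma_connected (f g) (f h) <-> exists k, inGE2 k /\ h = k *m g)) /\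
    (forall v, unimodular v -> exists g, inGL2 g /\ gamma_connected v (f g)) /\
    (forall g h, inGL2 g -> inGL2 h -> gamma_connected (f (g *m h)) (f g *m h)).
Proof.
exists (fun g => row 0 g); split; first by move=> g; exact: GL_unimod0.
split.
  move=> g h Gg Gh; split.
    case/conn_C => [E|[_ [_ C]]]; first exact: same_row.
    exact: C.
  case=> k [K ->]; apply: rst_sym; have [_ Q] := GE_Q A k K; exact: Q.
split.
  move=> v /completion [g [Gg Rg]]; exists g; split=> //; rewrite Rg; exact: rst_refl.
by move=> g h _ _; rewrite row_mul; apply: rst_refl.
Qed.
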